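(* Let $D=[0,x_0]\times[0,y_0]$, let $\varphi:D\to\mathbb{R}$ be a smooth solution of $\varphi_{xy}=\sin\varphi$, and let $\mathcal{U}(x,y,\lambda)$ be its extended normalized frame, i.e. the solution of $$\partial_x\mathcal{U}=\mathcal{U}\,\frac{i}{2}\begin{pmatrix}\varphi_x&-\lambda\\-\lambda&-\varphi_x\end{pmatrix},\qquad \partial_y\mathcal{U}=\mathcal{U}\,\frac{i}{2}\lambda^{-1}\begin{pmatrix}0&e^{-i\varphi}\\ e^{i\varphi}&0\end{pmatrix},\qquad \mathcal{U}(0,0,\lambda)=I.$$ Let $\theta:D\to\mathbb{R}$ be smooth, let $\mathcal{R}(x,y)=\exp\!\big(\tfrac{i}{2}\theta(x,y)\sigma_3\big)$ be the ($\lambda$-independent) $\mathrm{SU}(2)$-matrix of the rotation by angle $\theta(x,y)$ about $e_3$, let $\mathcal{R}_0:=\mathcal{R}(0,0)$, and define the gauged frame $\hat{\mathcal{U}}:=\mathcal{R}_0^{-1}\,\mathcal{U}\,\mathcal{R}$. Suppose that at a point $(x,y)$ of an open set $\Omega\subset D$, both $\mathcal{U}$ and $\hat{\mathcal{U}}$ admit Birkhoff factorizations $$\mathcal{U}=\mathcal{U}_+V_-=\mathcal{U}_-V_+,\qquad \hat{\mathcal{U}}=\hat{\mathcal{U}}_+\hat V_-=\hat{\mathcal{U}}_-\hat V_+,$$ with $\mathcal{U}_+,\hat{\mathcal{U}}_+\in\Lambda^+_*\mathrm{SU}(2)$, $V_-,\hat V_-\in\Lambda^-\mathrm{SU}(2)$,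 $\mathcal{U}_-,\hat{\mathcal{U}}_-\in\Lambda^-_*\mathrm{SU}(2)$, $V_+,\hat V_+\in\Lambda^+\mathrm{SU}(2)$, for all $(x,y)\in\Omega$. Define the potentials on $\Omega$ by $$\eta^x:=-\lambda^{-1}\,\mathcal{U}_+^{-1}\partial_x\mathcal{U}_+,\quad \eta^y:=-\lambda\,\mathcal{U}_-^{-1}\partial_y\mathcal{U}_-,\quad \hat\eta^x:=-\lambda^{-1}\,\hat{\mathcal{U}}_+^{-1}\partial_x\hat{\mathcal{U}}_+,\quad \hat\eta^y:=-\lambda\,\hat{\mathcal{U}}_-^{-1}\partial_y\hat{\mathcal{U}}_-.$$ Then on $\Omega$ $$\hat\eta^x=\mathcal{R}_0^{-1}\,\eta^x\,\mathcal{R}_0,\qquad \hat\eta^y=\mathcal{R}_0^{-1}\,\eta^y\,\mathcal{R}_0.$$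
   Context: $I$ is the $2\times2$ identity and $\sigma_3=\mathrm{diag}(1,-1)$. The frame $\mathcal{U}(x,y,\lambda)$ is defined for $\lambda\in\mathbb{C}\setminus\{0\}$, is holomorphic in $\lambda$, is $\mathrm{SU}(2)$-valued for real $\lambda\neq 0$, and satisfies $\sigma_3\mathcal{U}(x,y,\lambda)\sigma_3=\mathcal{U}(x,y,-\lambda)$. Twisted loops: a loop is a map $g(\lambda)=\sum_{k\in\mathbb{Z}}g_k\lambda^k$ (Laurent series with $2\times2$ complex matrix coefficients converging on $\mathbb{C}\setminus\{0\}$) with $g(\lambda)\in\mathrm{SU}(2)$ for real $\lambda\ne0$ and $\sigma_3g(\lambda)\sigma_3=g(-\lambda)$. $\Lambda^+\mathrm{SU}(2)$: loops with $g_k=0$ for $k<0$; $\Lambda^+_*\mathrm{SU}(2)$: those in $\Lambda^+\mathrm{SU}(2)$ with $g_0=I$. $\Lambda^-\mathrm{SU}(2)$: loops with $g_k=0$ for $k>0$; $\Lambda^-_*\mathrm{SU}(2)$: those in $\Lambda^-\mathrm{SU}(2)$ with $g_0=I$. All factors are regarded as smooth functions of $(x,y)\in\Omega$ (and $\lambda$). *)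

(* Defs.v *)
From Stdlib Require Import Reals ZArith List.
From Coquelicot Require Import Coquelicot.

Open Scope R_scope.

Definition cexpi (t : R) : C := (cos t, sin t).

Definition Czpow (l : C) (k : Z) : C :=
  match k with
  | Z0 => RtoC 1
  | Zpos p => Cpow l (Pos.to_nat p)
  | Zneg p => Cinv (Cpow l (Pos.to_nat p))
  end.

Record M2 := mkM2 { m11 : C; m12 : C; m21 : C; m22 : C }.

Definition ent (m : M2) (i j : bool) : C :=
  match i, j with
  | false, false => m11 m | false, true => m12 m
  | true, false => m21 m | true, true => m22 m
  end.

Definition M2id : M2 := mkM2 (RtoC 1) (RtoC 0) (RtoC 0) (RtoC 1).
Definition M2zero : M2 := mkM2 (RtoC 0) (RtoC 0) (RtoC 0) (RtoC 0).
Definition sigma3 : M2 := mkM2 (RtoC 1) (RtoC 0) (RtoC 0) (Copp (RtoC 1)).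

Definition M2mul (a b : M2) : M2 :=
  mkM2 (Cplus (Cmult (m11 a) (m11 b)) (Cmult (m12 a) (m21 b)))
       (Cplus (Cmult (m11 a) (m12 b)) (Cmult (m12 a) (m22 b)))
       (Cplus (Cmult (m21 a) (m11 b)) (Cmult (m22 a) (m21 b)))
       (Cplus (Cmult (m21 a) (m12 b)) (Cmult (m22 a) (m22 b))).

Definition M2scal (c : C) (a : M2) : M2 :=
  mkM2 (Cmult c (m11 a)) (Cmult c (m12 a)) (Cmult c (m21 a)) (Cmult c (m22 a)).

Definition M2det (a : M2) : C :=
  Cminus (Cmult (m11 a) (m22 a)) (Cmult (m12 a) (m21 a)).

Definition M2inv (a : M2) : M2 :=
  M2scal (Cinv (M2det a)) (mkM2 (m22 a) (Copp (m12 a)) (Copp (m21 a)) (m11 a)).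

Definition M2adj (a : M2) : M2 :=
  mkM2 (Cconj (m11 a)) (Cconj (m21 a)) (Cconj (m12 a)) (Cconj (m22 a)).

Definition is_SU2 (a : M2) : Prop := M2mul (M2adj a) a = M2id /\ M2det a = RtoC 1.

(** ** Rotation about e_3: exp((i/2) t sigma_3), written out as a diagonal matrix *)
Definition Rot (t : R) : M2 :=
  mkM2 (cexpi (t / 2)) (RtoC 0) (RtoC 0) (cexpi (- (t / 2))).

(* a : Z -> M2 are the Laurent coefficients of g on C\{0}: for every lambda <> 0 and
   every entry, both halves of the Laurent series converge and sum to g(lambda). *)
Definition laurent_coeffs (a : Z -> M2) (g : C -> M2) : Prop :=
  forall l : C, l <> RtoC 0 -> forall i j : bool,
    exists Pp Pn : C,
      @is_series C_AbsRing C_NormedModule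
        (fun n : nat => Cmult (ent (a (Z.of_nat n)) i j) (Czpow l (Z.of_nat n))) Pp /\
      @is_series C_AbsRing C_NormedModule
        (fun n : nat => Cmult (ent (a (- Z.of_nat (S n))%Z) i j) (Czpow l (- Z.of_nat (S n))%Z)) Pn /\
      ent (g l) i j = Cplus Pp Pn.

Definition SU2_on_reals (g : C -> M2) : Prop :=
  forall r : R, r <> 0 -> is_SU2 (g (RtoC r)).

Definition twisted (g : C -> M2) : Prop :=
  forall l : C, l <> RtoC 0 -> M2mul (M2mul sigma3 (g l)) sigma3 = g (Copp l).

Definition loop_with (P : (Z -> M2) -> Prop) (g : C -> M2) : Prop :=
  exists a : Z -> M2, laurent_coeffs a g /\ P a /\ SU2_on_reals g /\ twisted g.

Definition LplusSU2 (g : C -> M2) : Prop :=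
  loop_with (fun a => forall k, (k < 0)%Z -> a k = M2zero) g.
Definition LplusStarSU2 (g : C -> M2) : Prop :=
  loop_with (fun a => (forall k, (k < 0)%Z -> a k = M2zero) /\ a 0%Z = M2id) g.
Definition LminusSU2 (g : C -> M2) : Prop :=
  loop_with (fun a => forall k, (0 < k)%Z -> a k = M2zero) g.
Definition LminusStarSU2 (g : C -> M2) : Prop :=
  loop_with (fun a => (forall k, (0 < k)%Z -> a k = M2zero) /\ a 0%Z = M2id) g.

Definition open2 (O : R -> R -> Prop) : Prop :=
  forall x y, O x y -> exists e : R, 0 < e /\
    forall x' y', Rabs (x' - x) < e -> Rabs (y' - y) < e -> O x' y'.

Inductive dir := DX | DY.

(* C^infinity on an open set O: all iterated partial derivatives exist on O and are
   (jointly) continuous there; F w is the iterated partial derivative along the word w. *)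
Definition smooth_on (O : R -> R -> Prop) (f : R -> R -> R) : Prop :=
  exists F : list dir -> R -> R -> R, F nil = f /\
    forall (w : list dir) x y, O x y ->
      is_derive (fun t => F w t y) x (F (DX :: w) x y) /\
      is_derive (fun t => F w x t) y (F (DY :: w) x y) /\
      continuous (fun p : R * R => F w (fst p) (snd p)) (x, y).

Definition inD (x0 y0 x y : R) : Prop := 0 <= x <= x0 /\ 0 <= y <= y0.

Definition smooth_on_D (x0 y0 : R) (f : R -> R -> R) : Prop :=
  exists O, open2 O /\ (forall x y, inD x0 y0 x y -> O x y) /\ smooth_on O f.

Definition M2smooth_on (O : R -> R -> Prop) (f : R -> R -> M2) : Prop :=
  forall i j : bool,
    smooth_on O (fun x y => fst (ent (f x y) i j)) /\
    smooth_on O (fun x y => snd (ent (f x y) i j)).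

(* partial derivatives (total operators, the true derivative when it exists) *)
Definition pdx (f : R -> R -> R) (x y : R) : R := Derive (fun t => f t y) x.
Definition pdy (f : R -> R -> R) (x y : R) : R := Derive (fun t => f x t) y.

Definition M2pdx (f : R -> R -> M2) (x y : R) : M2 :=
  let d i j : C := (pdx (fun s t => fst (ent (f s t) i j)) x y,
                    pdx (fun s t => snd (ent (f s t) i j)) x y) in
  mkM2 (d false false) (d false true) (d true false) (d true true).
Definition M2pdy (f : R -> R -> M2) (x y : R) : M2 :=
  let d i j : C := (pdy (fun s t => fst (ent (f s t) i j)) x y,
                    pdy (fun s t => snd (ent (f s t) i j)) x y) in
  mkM2 (d false false) (d false true) (d true false) (d true true).

Definition has_M2pdx (f : R -> R -> M2) (x y : R) (l : M2) : Prop :=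
  forall i j : bool,
    is_derive (fun t => fst (ent (f t y) i j)) x (fst (ent l i j)) /\
    is_derive (fun t => snd (ent (f t y) i j)) x (snd (ent l i j)).
Definition has_M2pdy (f : R -> R -> M2) (x y : R) (l : M2) : Prop :=
  forall i j : bool,
    is_derive (fun t => fst (ent (f x t) i j)) y (fst (ent l i j)) /\
    is_derive (fun t => snd (ent (f x t) i j)) y (snd (ent l i j)).

Definition frameA (phi : R -> R -> R) (x y : R) (l : C) : M2 :=
  M2scal (Cmult Ci (RtoC (1/2)))
    (mkM2 (RtoC (pdx phi x y)) (Copp l) (Copp l) (RtoC (- pdx phi x y))).
Definition frameB (phi : R -> R -> R) (x y : R) (l : C) : M2 :=
  M2scal (Cmult (Cmult Ci (RtoC (1/2))) (Cinv l))
    (mkM2 (RtoC 0) (cexpi (- phi x y)) (cexpi (phi x y)) (RtoC 0)).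

Definition is_frame (x0 y0 : R) (phi : R -> R -> R) (U : R -> R -> C -> M2) : Prop :=
  forall l : C, l <> RtoC 0 ->
    U 0 0 l = M2id /\
    forall x y, inD x0 y0 x y ->
      has_M2pdx (fun s t => U s t l) x y (M2mul (U x y l) (frameA phi x y l)) /\
      has_M2pdy (fun s t => U s t l) x y (M2mul (U x y l) (frameB phi x y l)).

Definition eta_x (Up : R -> R -> C -> M2) (x y : R) (l : C) : M2 :=
  M2scal (Copp (Cinv l)) (M2mul (M2inv (Up x y l)) (M2pdx (fun s t => Up s t l) x y)).
Definition eta_y (Um : R -> R -> C -> M2) (x y : R) (l : C) : M2 :=
  M2scal (Copp l) (M2mul (M2inv (Um x y l)) (M2pdy (fun s t => Um s t l) x y)).

(* Main.v *)
Require Import Defs.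
From Stdlib Require Import Reals ZArith List Lra Lia.
From Coquelicot Require Import Coquelicot.
Open Scope R_scope.

Definition cser (u : nat -> C) (s : C) : Prop :=
  is_series (fun n => fst (u n)) (fst s) /\ is_series (fun n => snd (u n)) (snd s).

Lemma cser_plus u v s t : cser u s -> cser v t -> cser (fun n => Cplus (u n) (v n)) (Cplus s t).
Proof.
  intros [H1 H2] [H3 H4]; split; simpl.
  - exact (is_series_plus _ _ _ _ H1 H3).
  - exact (is_series_plus _ _ _ _ H2 H4).
Qed.

Lemma cser_ext u v s : (forall n, u n = v n) -> cser u s -> cser v s.
Proof.
  intros E [H1 H2]; split.
  - apply (is_series_ext _ _ _ (fun n => f_equal fst (E n)) H1).
  - apply (is_series_ext _ _ _ (fun n => f_equal snd (E n)) H2).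
Qed.

Lemma cser_scal c u s : cser u s -> cser (fun n => Cmult c (u n)) (Cmult c s).
Proof.
  intros [H1 H2]; destruct c as [c1 c2]; split; simpl.
  - apply (is_series_minus _ _ _ _ (is_series_scal c1 _ _ H1) (is_series_scal c2 _ _ H2)).
  - apply (is_series_plus _ _ _ _ (is_series_scal c1 _ _ H2) (is_series_scal c2 _ _ H1)).
Qed.

Lemma cser_unique u s t : cser u s -> cser u t -> s = t.
Proof.
  intros [H1 H2] [H3 H4].
  apply is_series_unique in H1, H2, H3, H4.
  destruct s, t; simpl in *; congruence.
Qed.

Lemma rser_single (a : nat -> R) : (forall n, a (S n) = 0) -> is_series a (a 0%nat).
Proof.
  intros H. unfold is_series.
  apply (filterlim_ext (fun _ => a 0%nat)).
  - intros n; induction n.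
    + rewrite sum_O; reflexivity.
    + rewrite sum_Sn, <- IHn, H. unfold plus; simpl; ring.
  - apply filterlim_const.
Qed.

Lemma cser_single (u : nat -> C) : (forall n, u (S n) = RtoC 0) -> cser u (u 0%nat).
Proof.
  intros H; split; apply rser_single; intros n; rewrite H; reflexivity.
Qed.

Lemma cser_shift (u : nat -> C) s : cser (fun n => u (S n)) s -> cser u (Cplus (u 0%nat) s).
Proof.
  intros [H1 H2]; split; apply is_series_decr_1; simpl;
  match goal with |- is_series _ ?l => idtac end.
  - match goal with |- is_series _ ?l => replace l with (fst s) by (unfold plus, opp; simpl; ring) end. exact H1.
  - match goal with |- is_series _ ?l => replace l with (snd s) by (unfold plus, opp; simpl; ring) end. exact H2.
Qed.

Lemma sum_n_fst (u : nat -> C) n : fst (@sum_n C_AbelianMonoid u n) = @sum_n R_AbelianMonoid (fun k => fst (u k)) n.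
Proof.
  induction n.
  - rewrite !sum_O; reflexivity.
  - rewrite !sum_Sn, <- IHn; reflexivity.
Qed.

Lemma sum_n_snd (u : nat -> C) n : snd (@sum_n C_AbelianMonoid u n) = @sum_n R_AbelianMonoid (fun k => snd (u k)) n.
Proof.
  induction n.
  - rewrite !sum_O; reflexivity.
  - rewrite !sum_Sn, <- IHn; reflexivity.
Qed.

Lemma cser_of_C (u : nat -> C) s : @is_series C_AbsRing C_NormedModule u s -> cser u s.
Proof.
  intros H; unfold is_series in H. pose proof (proj1 (filterlim_locally (F:=eventually) (sum_n u) s) H) as H'; clear H; rename H' into H.
  split; unfold is_series; apply filterlim_locally; intros eps;
  specialize (H eps); eapply filter_imp; try exact H; intros n [Hb1 Hb2].
  - rewrite <- sum_n_fst; exact Hb1.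
  - rewrite <- sum_n_snd; exact Hb2.
Qed.
Lemma Cmod_fst z : Rabs (fst z) <= Cmod z.
Proof. eapply Rle_trans; [apply Rmax_l | apply Rmax_Cmod]. Qed.
Lemma Cmod_snd z : Rabs (snd z) <= Cmod z.
Proof. eapply Rle_trans; [apply Rmax_r | apply Rmax_Cmod]. Qed.
Lemma Cmod_le_2 z : Cmod z <= 2 * (Rabs (fst z) + Rabs (snd z)).
Proof.
  eapply Rle_trans; [apply Cmod_2Rmax|].
  assert (sqrt 2 <= 2).
  { rewrite <- (sqrt_square 2) at 2 by lra. apply sqrt_le_1_alt; lra. }
  pose proof (Rabs_pos (fst z)); pose proof (Rabs_pos (snd z)).
  pose proof (sqrt_pos 2). unfold Rmax; destruct Rle_dec; nra.
Qed.


Fixpoint csum (f : nat -> C) (n : nat) : C :=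
  match n with O => f O | S m => Cplus (csum f m) (f (S m)) end.

Lemma csum_fst f n : fst (csum f n) = sum_f_R0 (fun k => fst (f k)) n.
Proof. induction n; simpl; [reflexivity| rewrite IHn; reflexivity]. Qed.
Lemma csum_snd f n : snd (csum f n) = sum_f_R0 (fun k => snd (f k)) n.
Proof. induction n; simpl; [reflexivity| rewrite IHn; reflexivity]. Qed.
Lemma csum_ext f g n : (forall k, (k <= n)%nat -> f k = g k) -> csum f n = csum g n.
Proof.
  induction n; intros H; simpl.
  - apply H; lia.
  - rewrite IHn by (intros; apply H; lia). rewrite H by lia. reflexivity.
Qed.
Lemma csum_Cmod f n : Cmod (csum f n) <= sum_f_R0 (fun k => Cmod (f k)) n.
Proof.
  induction n; simpl; [lra|].
  eapply Rle_trans; [apply Cmod_triangle|]. lra.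
Qed.
Lemma csum_scal c f n : Cmult c (csum f n) = csum (fun k => Cmult c (f k)) n.
Proof. induction n; simpl; [reflexivity| rewrite <- IHn; ring]. Qed.

Lemma Cpow_add (l : C) m n : Cpow l (m + n) = Cmult (Cpow l m) (Cpow l n).
Proof. induction m; simpl; [ring| rewrite IHm; ring]. Qed.
Lemma Cpow_mul_l (a b : C) n : Cpow (Cmult a b) n = Cmult (Cpow a n) (Cpow b n).
Proof. induction n; simpl; [ring| rewrite IHn; ring]. Qed.
Lemma Cpow_mul (a : C) m n : Cpow a (m * n) = Cpow (Cpow a m) n.
Proof.
  induction n; simpl.
  - rewrite Nat.mul_0_r; reflexivity.
  - rewrite <- IHn, <- Cpow_add. f_equal; lia.
Qed.
Lemma Cpow_1 n : Cpow (RtoC 1) n = RtoC 1.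
Proof. induction n; simpl; [reflexivity| rewrite IHn; ring]. Qed.

Definition PS (a : nat -> C) (f : C -> C) : Prop :=
  (forall R, 0 <= R -> ex_series (fun n => Cmod (a n) * R ^ n)) /\
  (forall l, l <> RtoC 0 -> cser (fun n => Cmult (a n) (Cpow l n)) (f l)).
Definition P0 (f : C -> C) (c : C) : Prop := exists a, PS a f /\ a O = c.

Lemma P0_ext f g c : P0 f c -> (forall l, l <> RtoC 0 -> f l = g l) -> P0 g c.
Proof.
  intros [a [[H1 H2] H3]] E. exists a; split; [split|]; auto.
  intros l Hl; rewrite <- E by auto; auto.
Qed.

Lemma ex_series_nonneg_le (a b : nat -> R) :
  (forall n, 0 <= a n <= b n) -> ex_series b -> ex_series a.
Proof.
  intros H Hb. apply (ex_series_le (K:=R_AbsRing) (V:=R_CompleteNormedModule) a b); auto.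
  intros n; unfold norm; simpl; unfold abs; simpl. rewrite Rabs_pos_eq; apply H.
Qed.

Lemma P0_const c : P0 (fun _ => c) c.
Proof.
  exists (fun n => match n with O => c | S _ => RtoC 0 end). split; [split|]; auto.
  - intros R HR. eapply ex_series_ext. 2: exists (Cmod c); apply (rser_single (fun n => match n with O => Cmod c | S _ => 0 end)); intros n; reflexivity.
    intros [|n]; simpl; [ring| rewrite Cmod_0; ring].
  - intros l Hl.
    assert (K := cser_single (fun n => Cmult (match n with O => c | S _ => RtoC 0 end) (Cpow l n))).
    simpl in K. rewrite Cmult_1_r in K. apply K. intros n; simpl; ring.
Qed.

Lemma P0_plus f g c d : P0 f c -> P0 g d -> P0 (fun l => Cplus (f l) (g l)) (Cplus c d).
Proof.
  intros [a [[Ha1 Ha2] Ha3]] [b [[Hb1 Hb2] Hb3]].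
  exists (fun n => Cplus (a n) (b n)); split; [split|]; [| |subst; reflexivity].
  - intros R HR. apply (ex_series_nonneg_le _ (fun n => Cmod (a n) * R ^ n + Cmod (b n) * R ^ n)).
    + intros n; split.
      * apply Rmult_le_pos; [apply Cmod_ge_0| apply pow_le; auto].
      * rewrite <- Rmult_plus_distr_r. apply Rmult_le_compat_r; [apply pow_le; auto| apply Cmod_triangle].
    + apply (ex_series_plus (K:=R_AbsRing) (fun n => Cmod (a n) * R^n) (fun n => Cmod (b n) * R^n)); auto.
  - intros l Hl. eapply cser_ext; [|apply cser_plus; [apply Ha2|apply Hb2]; auto].
    intros n; simpl; ring.
Qed.

Lemma exs_fst u : ex_series (fun n => Cmod (u n)) -> ex_series (fun n => Rabs (fst (u n))).
Proof. intros H; apply (ex_series_nonneg_le _ _ (fun n => conj (Rabs_pos _) (Cmod_fst (u n))) H). Qed.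
Lemma exs_snd u : ex_series (fun n => Cmod (u n)) -> ex_series (fun n => Rabs (snd (u n))).
Proof. intros H; apply (ex_series_nonneg_le _ _ (fun n => conj (Rabs_pos _) (Cmod_snd (u n))) H). Qed.

Lemma rser_minus a b la lb : is_series a la -> is_series b lb -> is_series (fun n => a n - b n) (la - lb).
Proof. intros H1 H2. apply (is_series_minus _ _ _ _ H1 H2). Qed.
Lemma rser_plus a b la lb : is_series a la -> is_series b lb -> is_series (fun n => a n + b n) (la + lb).
Proof. intros H1 H2. apply (is_series_plus _ _ _ _ H1 H2). Qed.

Lemma cser_cauchy u v s t : cser u s -> cser v t ->
  ex_series (fun n => Cmod (u n)) -> ex_series (fun n => Cmod (v n)) ->
  cser (fun n => csum (fun k => Cmult (u k) (v (n - k)%nat)) n) (Cmult s t).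
Proof.
  intros [Hu1 Hu2] [Hv1 Hv2] Au Av. split; simpl.
  - eapply is_series_ext; [| apply rser_minus; (apply is_series_mult; [exact Hu1|exact Hv1|apply exs_fst; exact Au|apply exs_fst; exact Av]) || (apply is_series_mult; [exact Hu2|exact Hv2|apply exs_snd; exact Au|apply exs_snd; exact Av])].
    intros n; simpl. rewrite csum_fst, <- minus_sum. apply sum_eq; intros; reflexivity.
  - eapply is_series_ext; [| apply rser_plus; (apply is_series_mult; [exact Hu1|exact Hv2|apply exs_fst; exact Au|apply exs_snd; exact Av]) || (apply is_series_mult; [exact Hu2|exact Hv1|apply exs_snd; exact Au|apply exs_fst; exact Av])].
    intros n; simpl. rewrite csum_snd, <- plus_sum. apply sum_eq; intros; reflexivity.
Qed.

Lemma sum_f_R0_nonneg f n : (forall k, 0 <= f k) -> 0 <= sum_f_R0 f n.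
Proof. intros H; induction n; simpl; [apply H| specialize (H (S n)); lra]. Qed.

Lemma sum_f_R0_le f g n : (forall k, (k <= n)%nat -> f k <= g k) -> sum_f_R0 f n <= sum_f_R0 g n.
Proof.
  induction n; intros H; simpl; [apply H; lia|].
  apply Rplus_le_compat; [apply IHn; intros; apply H; lia| apply H; lia].
Qed.

Definition cconv (a b : nat -> C) (n : nat) : C := csum (fun k => Cmult (a k) (b (n - k)%nat)) n.

Lemma P0_mult f g c d : P0 f c -> P0 g d -> P0 (fun l => Cmult (f l) (g l)) (Cmult c d).
Proof.
  intros [a [[Ha1 Ha2] Ha3]] [b [[Hb1 Hb2] Hb3]].
  exists (cconv a b); split; [split|]; [| |subst; reflexivity].
  - intros R HR.
    apply (ex_series_nonneg_le _ (fun n => sum_f_R0 (fun k => (Cmod (a k) * R ^ k) * (Cmod (b (n - k)%nat) * R ^ (n - k))) n)).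
    + intros n; split.
      * apply Rmult_le_pos; [apply Cmod_ge_0| apply pow_le; auto].
      * eapply Rle_trans; [apply Rmult_le_compat_r; [apply pow_le; auto| apply csum_Cmod]|].
        rewrite Rmult_comm, scal_sum. apply sum_f_R0_le. intros k Hk.
        rewrite Cmod_mult. replace (R ^ n) with (R ^ k * R ^ (n - k)) by (rewrite <- pow_add; f_equal; lia). lra.
    + exists ((Series (fun n => Cmod (a n) * R ^ n)) * (Series (fun n => Cmod (b n) * R ^ n))).
      apply (is_series_mult_pos (fun k => Cmod (a k) * R^k) (fun k => Cmod (b k) * R^k)); try (apply Series_correct; auto);
      intros; apply Rmult_le_pos; try apply Cmod_ge_0; apply pow_le; auto.
  - intros l Hl. eapply cser_ext; [| apply cser_cauchy; [apply Ha2 | apply Hb2 | |]; auto].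
    + intros n; unfold cconv. rewrite Cmult_comm, csum_scal. apply csum_ext. intros k Hk.
      replace n with (k + (n - k))%nat at 3 by lia. rewrite Cpow_add. ring.
    + eapply ex_series_ext; [|apply (Ha1 (Cmod l)), Cmod_ge_0]. intros n; simpl; rewrite Cmod_mult, Cmod_pow; reflexivity.
    + eapply ex_series_ext; [|apply (Hb1 (Cmod l)), Cmod_ge_0]. intros n; simpl; rewrite Cmod_mult, Cmod_pow; reflexivity.
Qed.

Lemma Series_nonneg (c : nat -> R) : (forall n, 0 <= c n) -> ex_series c -> 0 <= Series c.
Proof.
  intros H [l Hl]. rewrite (is_series_unique _ _ Hl).
  apply is_series_Reals in Hl.
  apply (Rle_trans _ (sum_f_R0 c 0)); [apply H|].
  apply (sum_incr c 0 l Hl H) || (simpl; apply (sum_incr c 0 l); auto).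
Qed.

Lemma pow_le1 r k : 0 <= r <= 1 -> r ^ k <= 1.
Proof. intros H; induction k; simpl; [lra|]. pose proof (pow_le r k (proj1 H)). nra. Qed.

Lemma series_tail_le (c : nat -> R) N : (forall n, 0 <= c n) -> ex_series c ->
  Series (fun k => c (N + k)%nat) <= Series c.
Proof.
  intros H Hc. destruct N as [|N].
  - right; apply Series_ext; intros; reflexivity.
  - rewrite (Series_incr_n c (S N)) by (auto; lia).
    pose proof (sum_f_R0_nonneg c (Init.Nat.pred (S N)) H). lra.
Qed.

Lemma real_K_step (al : nat -> R) n :
  (forall r, 0 < r -> is_series (fun m => al m * r ^ m) 0) ->
  ex_series (fun m => Rabs (al m)) ->
  (forall i, (i < n)%nat -> al i = 0) -> al n = 0.
Proof.
  intros H HA Hz.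
  set (A := Series (fun m => Rabs (al m))).
  assert (HA0 : 0 <= A) by (apply Series_nonneg; auto; intros; apply Rabs_pos).
  assert (Key : forall r, 0 < r <= 1 -> Rabs (al n) * r ^ n <= r ^ (S n) * A).
  { intros r Hr.
    assert (Hs := H r (proj1 Hr)).
    assert (Ht : is_series (fun k => al (S n + k)%nat * r ^ (S n + k)) (- (al n * r ^ n))).
    { apply (is_series_incr_n (fun m => al m * r ^ m) (S n)); [lia|]. simpl Init.Nat.pred.
      match goal with |- is_series _ ?l => replace l with 0; [exact Hs|] end.
      rewrite sum_n_Reals.
      assert (E : sum_f_R0 (fun m => al m * r ^ m) n = al n * r ^ n).
      { destruct n as [|n]; simpl; [reflexivity|].
        rewrite sum_eq_R0; [ring|]. intros i Hi; rewrite Hz by lia; ring. }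
      rewrite E. unfold plus; simpl; ring. }
    assert (Hex : ex_series (fun k => Rabs (al (S n + k)%nat))).
    { apply (ex_series_incr_n (fun m => Rabs (al m)) (S n)); auto. }
    apply is_series_unique in Ht.
    assert (Hb : Rabs (Series (fun k => al (S n + k)%nat * r ^ (S n + k))) <=
                 r ^ (S n) * Series (fun k => Rabs (al (S n + k)%nat))).
    { rewrite <- Series_scal_l.
      eapply Rle_trans; [apply Series_Rabs|].
      - apply (ex_series_nonneg_le _ (fun k => r ^ S n * Rabs (al (S n + k)%nat))).
        + intros k; split; [apply Rabs_pos|].
          rewrite Rabs_mult, (Rabs_pos_eq (r ^ _)) by (apply pow_le; lra).
          rewrite pow_add. assert (r ^ k <= 1) by (apply pow_le1; lra).
          assert (0 <= r ^ k) by (apply pow_le; lra).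
          pose proof (Rabs_pos (al (S n + k)%nat)). pose proof (pow_le r (S n) ltac:(lra)).
          assert (0 <= Rabs (al (S n + k)%nat) * r ^ S n) by (apply Rmult_le_pos; auto).
          apply Rle_trans with ((Rabs (al (S n + k)%nat) * r ^ S n) * 1); [|lra].
          rewrite <- Rmult_assoc; apply Rmult_le_compat_l; auto.
        + apply (ex_series_scal_l (K:=R_AbsRing) (r ^ S n)) in Hex. exact Hex.
      - apply Series_le.
        + intros k; split; [apply Rabs_pos|].
          rewrite Rabs_mult, (Rabs_pos_eq (r ^ _)) by (apply pow_le; lra).
          rewrite pow_add. assert (r ^ k <= 1) by (apply pow_le1; lra).
          assert (0 <= r ^ k) by (apply pow_le; lra).
          pose proof (Rabs_pos (al (S n + k)%nat)). pose proof (pow_le r (S n) ltac:(lra)).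
          assert (0 <= Rabs (al (S n + k)%nat) * r ^ S n) by (apply Rmult_le_pos; auto).
          apply Rle_trans with ((Rabs (al (S n + k)%nat) * r ^ S n) * 1); [|lra].
          rewrite <- Rmult_assoc; apply Rmult_le_compat_l; auto.
        + apply (ex_series_scal_l (K:=R_AbsRing) (r ^ S n)) in Hex. exact Hex. }
    rewrite Ht, Rabs_Ropp, Rabs_mult, (Rabs_pos_eq (r ^ n)) in Hb by (apply pow_le; lra).
    eapply Rle_trans; [exact Hb|]. apply Rmult_le_compat_l; [apply pow_le; lra|].
    apply (series_tail_le (fun m => Rabs (al m)) (S n)); auto. intros; apply Rabs_pos. }
  destruct (Req_dec (al n) 0) as [|Hne]; auto. exfalso.
  assert (Hp : 0 < Rabs (al n)) by (apply Rabs_pos_lt; auto).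
  set (r := Rmin 1 (Rabs (al n) / (2 * (A + 1)))).
  assert (Hr : 0 < r <= 1).
  { split; [apply Rmin_glb_lt; [lra| apply Rdiv_lt_0_compat; lra]| apply Rmin_l]. }
  specialize (Key r Hr). simpl in Key.
  assert (Hrn : 0 < r ^ n) by (apply pow_lt; lra).
  assert (Rabs (al n) <= r * A).
  { apply (Rmult_le_reg_r (r ^ n)); auto. nra. }
  assert (r <= Rabs (al n) / (2 * (A + 1))) by apply Rmin_r.
  assert (r * (2 * (A + 1)) <= Rabs (al n)).
  { apply (Rmult_le_compat_r (2 * (A + 1))) in H1; [|lra].
    unfold Rdiv in H1. rewrite Rmult_assoc, Rinv_l in H1 by lra. lra. }
  nra.
Qed.

Lemma real_K (al : nat -> R) :
  (forall r, 0 < r -> is_series (fun m => al m * r ^ m) 0) ->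
  ex_series (fun m => Rabs (al m)) -> forall n, al n = 0.
Proof.
  intros H HA n. induction n as [n IH] using (well_founded_induction Wf_nat.lt_wf).
  apply real_K_step; auto.
Qed.

Lemma C_eq (z w : C) : fst z = fst w -> snd z = snd w -> z = w.
Proof. destruct z, w; simpl; intros; subst; reflexivity. Qed.

Lemma PS_coef_zero a f : PS a f -> (forall r, 0 < r -> f (RtoC r) = RtoC 0) -> forall n, a n = RtoC 0.
Proof.
  intros [H1 H2] Hf n.
  assert (Hex : ex_series (fun m => Cmod (a m))).
  { eapply ex_series_ext; [|apply (H1 1); lra]. intros m; simpl; rewrite pow1; ring. }
  apply C_eq; simpl.
  - apply (real_K (fun m => fst (a m))); [|apply exs_fst; auto].
    intros r Hr. destruct (H2 (RtoC r)) as [K _].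
    { intros E; apply (f_equal fst) in E; simpl in E; lra. }
    rewrite Hf in K by auto. simpl in K. eapply is_series_ext; [|exact K].
    intros m; simpl; rewrite <- RtoC_pow; simpl; ring.
  - apply (real_K (fun m => snd (a m))); [|apply exs_snd; auto].
    intros r Hr. destruct (H2 (RtoC r)) as [_ K].
    { intros E; apply (f_equal fst) in E; simpl in E; lra. }
    rewrite Hf in K by auto. simpl in K. eapply is_series_ext; [|exact K].
    intros m; simpl; rewrite <- RtoC_pow; simpl; ring.
Qed.

Lemma PS_coef_val a f l : PS a f -> l <> RtoC 0 -> (forall n, a (S n) = RtoC 0) -> f l = a O.
Proof.
  intros [H1 H2] Hl Hz.
  apply (cser_unique _ _ _ (H2 l Hl)).
  assert (K := cser_single (fun n => Cmult (a n) (Cpow l n))).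
  simpl in K. rewrite Cmult_1_r in K. apply K. intros n; rewrite Hz; ring.
Qed.

Lemma P0_K f c d : P0 f c -> (forall r, 0 < r -> f (RtoC r) = d) -> forall l, l <> RtoC 0 -> f l = d.
Proof.
  intros Hf Hr l Hl.
  assert (Hg : P0 (fun l => Cplus (f l) (Cmult (RtoC (-1)) d)) (Cplus c (Cmult (RtoC (-1)) d))).
  { apply P0_plus; auto. apply P0_mult; apply P0_const. }
  destruct Hg as [a [Ha _]].
  assert (Z : forall n, a n = RtoC 0).
  { apply (PS_coef_zero _ _ Ha). intros r H; simpl; rewrite Hr by auto. apply C_eq; simpl; ring. }
  assert (E : Cplus (f l) (Cmult (RtoC (-1)) d) = RtoC 0).
  { rewrite (PS_coef_val _ _ l Ha Hl); [apply Z| intros; apply Z]. }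
  apply (f_equal (fun z => Cplus z d)) in E.
  replace (Cplus (Cplus (f l) (Cmult (RtoC (-1)) d)) d) with (f l) in E by (apply C_eq; simpl; ring).
  rewrite E. apply C_eq; simpl; ring.
Qed.

Fixpoint csl (f : nat -> C) (N : nat) : C :=
  match N with O => RtoC 0 | S m => Cplus (csl f m) (f m) end.

Lemma csl_Cmod_le f N c : (forall j, Cmod (f j) <= c) -> Cmod (csl f N) <= INR N * c.
Proof.
  intros H; induction N; simpl csl; [rewrite Cmod_0; simpl; lra|].
  eapply Rle_trans; [apply Cmod_triangle|]. rewrite S_INR. specialize (H N). lra.
Qed.

Definition cis (t : R) : C := (cos t, sin t).

Lemma cis_mult s t : Cmult (cis s) (cis t) = cis (s + t).
Proof. unfold cis; apply C_eq; simpl; rewrite ?cos_plus, ?sin_plus; ring. Qed.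

Lemma cis_pow t m : Cpow (cis t) m = cis (INR m * t).
Proof.
  induction m.
  - unfold cis; simpl; rewrite Rmult_0_l, cos_0, sin_0; reflexivity.
  - rewrite S_INR. change (Cpow (cis t) (S m)) with (Cmult (cis t) (Cpow (cis t) m)).
    rewrite IHm, cis_mult. f_equal; ring.
Qed.

Lemma Cmod_cis t : Cmod (cis t) = 1.
Proof.
  unfold Cmod, cis. cbn [fst snd]. rewrite <- sqrt_1. f_equal.
  rewrite <- (sin2_cos2 t). unfold Rsqr; ring.
Qed.

Lemma csl_ones N : csl (fun _ => RtoC 1) N = RtoC (INR N).
Proof. induction N; simpl csl; [reflexivity| rewrite IHN, S_INR; apply C_eq; simpl; ring]. Qed.

Lemma csl_geom q N : Cmult (csl (fun j => Cpow q j) N) (Cminus q (RtoC 1)) = Cminus (Cpow q N) (RtoC 1).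
Proof. induction N; simpl csl; simpl Cpow; [ring|]. rewrite Cmult_plus_distr_r, IHN. ring. Qed.

Lemma C_mult_reg (x y : C) : y <> RtoC 0 -> Cmult x y = RtoC 0 -> x = RtoC 0.
Proof.
  intros Hy E. apply (f_equal (fun z => Cmult z (Cinv y))) in E.
  rewrite <- Cmult_assoc, Cinv_r, Cmult_1_r in E by auto. rewrite E; ring.
Qed.

Lemma cis_eq_1 (N m : nat) : (0 < N)%nat -> (0 < m < 2 * N)%nat ->
  cis (INR m * (2 * PI / INR N)) = RtoC 1 -> m = N.
Proof.
  intros HN Hm E. unfold cis in E. apply (f_equal fst) in E; simpl in E.
  set (x := PI * INR m / INR N).
  assert (HNr : 0 < INR N) by (apply lt_0_INR; lia).
  replace (INR m * (2 * PI / INR N)) with (2 * x) in E by (unfold x; field; lra).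
  rewrite cos_2a_sin in E.
  assert (Hs : sin x = 0) by nra.
  destruct (sin_eq_0_0 x Hs) as [z Hz].
  unfold x in Hz. pose proof PI_RGT_0.
  assert (Hm' : INR m = IZR z * INR N).
  { apply (Rmult_eq_reg_l PI); [|lra]. replace (PI * INR m) with (PI * INR m / INR N * INR N) by (field; lra).
    rewrite Hz. ring. }
  assert (Hm1 : 0 < INR m) by (apply lt_0_INR; lia).
  assert (Hm2 : INR m < 2 * INR N) by (replace (2 * INR N) with (INR (2 * N)) by (rewrite mult_INR; reflexivity); apply lt_INR; lia).
  assert (0 < IZR z) by nra.
  assert (IZR z < 2) by nra.
  apply lt_IZR in H0. apply lt_IZR in H1.
  assert (z = 1%Z) by lia. subst z.
  apply INR_eq. rewrite Hm'; simpl; ring.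
Qed.

Lemma cser_zero : cser (fun _ => RtoC 0) (RtoC 0).
Proof. apply (cser_single (fun _ => RtoC 0)); reflexivity. Qed.

Lemma cser_csl (u : nat -> nat -> C) (s : nat -> C) N :
  (forall j, cser (u j) (s j)) -> cser (fun n => csl (fun j => u j n) N) (csl s N).
Proof.
  intros H; induction N; simpl csl; [apply cser_zero|]. apply cser_plus; auto.
Qed.

Lemma csl_ext f g N : (forall j, (j < N)%nat -> f j = g j) -> csl f N = csl g N.
Proof.
  induction N; intros H; simpl; [reflexivity|]. rewrite IHN by (intros; apply H; lia). rewrite H by lia; reflexivity.
Qed.

Lemma csl_scal c f N : csl (fun j => Cmult c (f j)) N = Cmult c (csl f N).
Proof. induction N; simpl csl; [ring| rewrite IHN; ring]. Qed.

Lemma cser_Cmod_bound u s c : cser u s -> (forall n, Cmod (u n) <= c n) -> ex_series c ->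
  Cmod s <= 4 * Series c.
Proof.
  intros [H1 H2] Hc Ec.
  assert (Hc0 : forall n, 0 <= c n) by (intros n; eapply Rle_trans; [apply Cmod_ge_0| apply Hc]).
  assert (B1 : Rabs (fst s) <= Series c).
  { rewrite <- (is_series_unique _ _ H1). eapply Rle_trans; [apply Series_Rabs|].
    - apply (ex_series_nonneg_le _ c); auto. intros n; split; [apply Rabs_pos|]. eapply Rle_trans; [apply Cmod_fst| apply Hc].
    - apply Series_le; auto. intros n; split; [apply Rabs_pos|]. eapply Rle_trans; [apply Cmod_fst| apply Hc]. }
  assert (B2 : Rabs (snd s) <= Series c).
  { rewrite <- (is_series_unique _ _ H2). eapply Rle_trans; [apply Series_Rabs|].
    - apply (ex_series_nonneg_le _ c); auto. intros n; split; [apply Rabs_pos|]. eapply Rle_trans; [apply Cmod_snd| apply Hc].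
    - apply Series_le; auto. intros n; split; [apply Rabs_pos|]. eapply Rle_trans; [apply Cmod_snd| apply Hc]. }
  pose proof (Cmod_le_2 s). lra.
Qed.

Lemma PS_bound a f l : PS a f -> l <> RtoC 0 -> Cmod l <= 1 ->
  Cmod (f l) <= 4 * Series (fun n => Cmod (a n) * 1 ^ n).
Proof.
  intros [H1 H2] Hl Hl1. apply (cser_Cmod_bound _ _ _ (H2 l Hl)); [|apply H1; lra].
  intros n. rewrite Cmod_mult, Cmod_pow. apply Rmult_le_compat_l; [apply Cmod_ge_0|].
  apply pow_incr; split; [apply Cmod_ge_0| auto].
Qed.

Lemma cser_delta k v : cser (fun n => if Nat.eqb n k then v else RtoC 0) v.
Proof.
  revert v; induction k; intros v.
  - apply (cser_single (fun n => if Nat.eqb n 0 then v else RtoC 0)). intros n; reflexivity.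
  - assert (K := cser_shift (fun n => if Nat.eqb n (S k) then v else RtoC 0) v (IHk v)).
    simpl in K. replace (Cplus (RtoC 0) v) with v in K by ring. exact K.
Qed.

Lemma Cinv_involutive (z : C) : z <> RtoC 0 -> Cinv (Cinv z) = z.
Proof.
  intros Hz. assert (Hi : Cinv z <> RtoC 0).
  { intros E. apply Hz. rewrite <- (Cmult_1_l z), <- (Cinv_l z) by auto. rewrite E; ring. }
  rewrite <- (Cmult_1_l (Cinv (Cinv z))), <- (Cinv_r z) by auto.
  rewrite <- Cmult_assoc, Cinv_r by auto. ring.
Qed.

Lemma Cinv_neq0 (z : C) : z <> RtoC 0 -> Cinv z <> RtoC 0.
Proof.
  intros Hz E. apply Hz. rewrite <- (Cmult_1_l z), <- (Cinv_l z) by auto. rewrite E; ring.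
Qed.

Definition z0 (N : nat) : C := cis (2 * PI / INR N).
Definition Gf (N k n : nat) : C := csl (fun j => Cpow (Cpow (z0 N) (n + N - k)) j) N.

Lemma z0_pow_N N : (0 < N)%nat -> Cpow (z0 N) N = RtoC 1.
Proof.
  intros HN. unfold z0. rewrite cis_pow.
  replace (INR N * (2 * PI / INR N)) with (2 * PI) by (field; apply not_0_INR; lia).
  unfold cis. rewrite cos_2PI, sin_2PI. reflexivity.
Qed.

Lemma Gf_k N k : (0 < N)%nat -> (k <= N)%nat -> Gf N k k = RtoC (INR N).
Proof.
  intros HN Hk. unfold Gf. replace (k + N - k)%nat with N by lia. rewrite z0_pow_N by auto.
  rewrite <- csl_ones. apply csl_ext; intros; apply Cpow_1.
Qed.

Lemma Gf_zero N k n : (k < N)%nat -> (n < N)%nat -> n <> k -> Gf N k n = RtoC 0.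
Proof.
  intros Hk Hn Hnk. unfold Gf. set (m := (n + N - k)%nat). set (q := Cpow (z0 N) m).
  assert (Hq : Cminus q (RtoC 1) <> RtoC 0).
  { intros E. assert (q = RtoC 1).
    { apply (f_equal (fun z => Cplus z (RtoC 1))) in E. replace (Cplus (Cminus q (RtoC 1)) (RtoC 1)) with q in E by ring. rewrite E; ring. }
    unfold q, z0 in H. rewrite cis_pow in H. apply cis_eq_1 in H; [| lia | unfold m; lia]. unfold m in H; lia. }
  apply (C_mult_reg _ _ Hq). rewrite csl_geom.
  unfold q. rewrite <- Cpow_mul, Nat.mul_comm, Cpow_mul, z0_pow_N, Cpow_1 by lia. ring.
Qed.

Lemma Gf_bound N k n : Cmod (Gf N k n) <= INR N.
Proof.
  unfold Gf. rewrite <- (Rmult_1_r (INR N)). apply csl_Cmod_le. intros j.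
  rewrite !Cmod_pow. unfold z0; rewrite Cmod_cis, !pow1. lra.
Qed.

Lemma liou_step a f M k N R : PS a f -> (forall l, l <> RtoC 0 -> Cmod (f l) <= M) ->
  (1 <= k)%nat -> (k < N)%nat -> 0 < R ->
  Cmod (a k) * R ^ k <= M + 4 * Series (fun j => Cmod (a (N + j)%nat) * R ^ (N + j)).
Proof.
  intros [H1 H2] HM Hk HkN HR.
  set (w := fun j => Cpow (z0 N) (j * (N - k))).
  set (lj := fun j => Cmult (RtoC R) (Cpow (z0 N) j)).
  assert (Hw : forall j, Cmod (w j) = 1).
  { intros j; unfold w, z0; rewrite Cmod_pow, Cmod_cis, pow1; reflexivity. }
  assert (Hl : forall j, lj j <> RtoC 0).
  { intros j E. apply (f_equal Cmod) in E. unfold lj in E.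
    rewrite Cmod_mult, Cmod_pow, Cmod_R, Cmod_0 in E. unfold z0 in E; rewrite Cmod_cis, pow1 in E.
    rewrite Rabs_pos_eq in E; lra. }
  set (S := csl (fun j => Cmult (w j) (f (lj j))) N).
  set (t := fun n => Cmult (Cmult (a n) (RtoC (R ^ n))) (Gf N k n)).
  assert (HS : cser t S).
  { eapply cser_ext; [|apply cser_csl; intros j; apply cser_scal; apply H2; apply Hl].
    intros n; simpl. unfold t, Gf. rewrite <- csl_scal. apply csl_ext. intros j Hj.
    unfold w, lj. rewrite Cpow_mul_l, <- RtoC_pow, <- !Cpow_mul.
    replace ((n + N - k) * j)%nat with (j * (N - k) + j * n)%nat by nia. rewrite Cpow_add. ring. }
  assert (Hr := cser_plus _ _ _ _ HS (cser_scal (RtoC (-1)) _ _ (cser_delta k (t k)))).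
  set (c := fun n => if Nat.leb N n then INR N * (Cmod (a n) * R ^ n) else 0).
  assert (Hc0 : forall n, 0 <= INR N * (Cmod (a n) * R ^ n)).
  { intros n; apply Rmult_le_pos; [apply pos_INR| apply Rmult_le_pos; [apply Cmod_ge_0| apply pow_le; lra]]. }
  assert (Ec : ex_series c).
  { apply (ex_series_nonneg_le _ (fun n => INR N * (Cmod (a n) * R ^ n))).
    - intros n; unfold c; destruct (Nat.leb N n); split; auto; lra.
    - apply (ex_series_scal_l (K:=R_AbsRing) (INR N) (fun n => Cmod (a n) * R ^ n)); apply H1; lra. }
  assert (Brest : Cmod (Cplus S (Cmult (RtoC (-1)) (t k))) <= 4 * Series c).
  { apply (cser_Cmod_bound _ _ _ Hr); auto. intros n. unfold c.
    destruct (Nat.leb_spec N n) as [HNn|HNn].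
    - replace (Nat.eqb n k) with false by (symmetry; apply Nat.eqb_neq; lia).
      replace (Cplus (t n) (Cmult (RtoC (-1)) (RtoC 0))) with (t n) by ring.
      unfold t. rewrite !Cmod_mult, Cmod_R, Rabs_pos_eq by (apply pow_le; lra).
      pose proof (Gf_bound N k n). pose proof (Cmod_ge_0 (a n)). pose proof (pow_le R n ltac:(lra)).
      rewrite Rmult_comm. apply Rmult_le_compat_r; [apply Rmult_le_pos|]; auto.
    - destruct (Nat.eqb_spec n k) as [->|Hnk].
      + replace (Cplus (t k) (Cmult (RtoC (-1)) (t k))) with (RtoC 0) by ring. rewrite Cmod_0; lra.
      + unfold t. rewrite Gf_zero by auto. replace (Cplus _ _) with (RtoC 0) by ring. rewrite Cmod_0; lra. }
  assert (Sc : Series c = INR N * Series (fun j => Cmod (a (N + j)%nat) * R ^ (N + j))).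
  { rewrite (Series_incr_n c N) by (auto; lia).
    rewrite sum_eq_R0. 2: { intros i Hi. unfold c. replace (Nat.leb N i) with false by (symmetry; apply Nat.leb_gt; lia). reflexivity. }
    rewrite Rplus_0_l, <- Series_scal_l. apply Series_ext. intros j. unfold c.
    replace (Nat.leb N (N + j)) with true by (symmetry; apply Nat.leb_le; lia). reflexivity. }
  assert (BS : Cmod S <= INR N * M).
  { apply csl_Cmod_le. intros j. rewrite Cmod_mult, Hw, Rmult_1_l. apply HM, Hl. }
  assert (Bt : Cmod (t k) = INR N * (Cmod (a k) * R ^ k)).
  { unfold t. rewrite !Cmod_mult, Cmod_R, Rabs_pos_eq by (apply pow_le; lra).
    rewrite Gf_k, Cmod_R, Rabs_pos_eq by (try apply pos_INR; lia). ring. }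
  assert (Tri : Cmod (t k) <= Cmod S + Cmod (Cplus S (Cmult (RtoC (-1)) (t k)))).
  { replace (t k) with (Cplus S (Copp (Cplus S (Cmult (RtoC (-1)) (t k))))) at 1 by ring.
    eapply Rle_trans; [apply Cmod_triangle| rewrite Cmod_opp; lra]. }
  assert (HN : 0 < INR N) by (apply lt_0_INR; lia).
  rewrite Bt, Sc in *.
  apply (Rmult_le_reg_l (INR N)); auto. nra.
Qed.

Lemma pow_ge_self R k : 1 <= R -> (1 <= k)%nat -> R <= R ^ k.
Proof.
  intros HR Hk. destruct k as [|k]; [lia|]. simpl.
  assert (1 <= R ^ k) by (clear Hk; induction k; simpl; nra). nra.
Qed.

Lemma liouville a b f : PS a f -> PS b (fun m => f (Cinv m)) -> forall k, (1 <= k)%nat -> a k = RtoC 0.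
Proof.
  intros Ha Hb k Hk.
  set (Ma := Series (fun n => Cmod (a n) * 1 ^ n)).
  set (Mb := Series (fun n => Cmod (b n) * 1 ^ n)).
  assert (Ma0 : 0 <= Ma).
  { apply Series_nonneg; [intros; rewrite pow1, Rmult_1_r; apply Cmod_ge_0| apply (proj1 Ha); lra]. }
  assert (Mb0 : 0 <= Mb).
  { apply Series_nonneg; [intros; rewrite pow1, Rmult_1_r; apply Cmod_ge_0| apply (proj1 Hb); lra]. }
  set (M := 4 * Ma + 4 * Mb).
  assert (HM : forall l, l <> RtoC 0 -> Cmod (f l) <= M).
  { intros l Hl. destruct (Rle_dec (Cmod l) 1) as [H|H].
    - pose proof (PS_bound _ _ l Ha Hl H). unfold M, Ma, Mb in *; lra.
    - rewrite <- (Cinv_involutive l) by auto.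
      assert (Hl' : Cinv l <> RtoC 0) by (apply Cinv_neq0; auto).
      assert (Cmod (Cinv l) <= 1).
      { rewrite Cmod_inv by auto. rewrite <- Rinv_1. apply Rinv_le_contravar; lra. }
      pose proof (PS_bound _ _ (Cinv l) Hb Hl' H0). simpl in H1. unfold M, Ma, Mb in *; lra. }
  assert (M0 : 0 <= M) by (unfold M; lra).
  assert (HR : forall R, 0 < R -> Cmod (a k) * R ^ k <= M).
  { intros R HR. apply Rle_plus_epsilon. intros eps Heps.
    set (c := fun n => Cmod (a n) * R ^ n).
    assert (Ec : ex_series c) by (apply (proj1 Ha); lra).
    assert (Hc := Series_correct _ Ec). apply is_series_Reals in Hc.
    destruct (Hc (eps / 4)) as [N0 HN0]; [lra|].
    set (N := S (Nat.max N0 k)).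
    pose proof (liou_step a f M k N R Ha HM Hk ltac:(unfold N; lia) HR) as Hs.
    assert (E : Series (fun j => Cmod (a (N + j)%nat) * R ^ (N + j)) = Series c - sum_f_R0 c (Init.Nat.pred N)).
    { rewrite (Series_incr_n c N) by (auto; lia). unfold c; ring. }
    specialize (HN0 (Init.Nat.pred N) ltac:(unfold N; simpl; lia)).
    unfold R_dist in HN0. apply Rabs_def2 in HN0. lra. }
  destruct (Req_dec (Cmod (a k)) 0) as [E|E]; [apply Cmod_eq_0; auto|].
  exfalso. pose proof (Cmod_ge_0 (a k)).
  set (R := M / Cmod (a k) + 1).
  assert (HR1 : 1 <= R) by (unfold R; assert (0 <= M / Cmod (a k)) by (apply Rdiv_le_0_compat; lra); lra).
  specialize (HR R ltac:(lra)). pose proof (pow_ge_self R k HR1 Hk).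
  assert (Cmod (a k) * R <= M) by nra.
  unfold R in H1. rewrite Rmult_plus_distr_l in H1.
  replace (Cmod (a k) * (M / Cmod (a k))) with M in H1 by (field; lra). lra.
Qed.

Lemma P0_liouville f c d : P0 f c -> P0 (fun m => f (Cinv m)) d -> forall l, l <> RtoC 0 -> f l = c.
Proof.
  intros [a [Ha Ha0]] [b [Hb _]] l Hl.
  rewrite (PS_coef_val a f l Ha Hl); auto.
  intros n; apply (liouville a b f Ha Hb); lia.
Qed.

Definition MP0 (G : C -> M2) (c : M2) : Prop := forall i j, P0 (fun l => ent (G l) i j) (ent c i j).
Definition MN0 (G : C -> M2) (c : M2) : Prop := MP0 (fun l => G (Cinv l)) c.

Definition adjg (a : M2) : M2 := mkM2 (m22 a) (Copp (m12 a)) (Copp (m21 a)) (m11 a).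

Lemma ent_mul A B i j : ent (M2mul A B) i j =
  Cplus (Cmult (ent A i false) (ent B false j)) (Cmult (ent A i true) (ent B true j)).
Proof. destruct i, j; reflexivity. Qed.

Lemma M2_ent_eq a b : (forall i j, ent a i j = ent b i j) -> a = b.
Proof.
  destruct a, b; intros H.
  pose proof (H false false); pose proof (H false true); pose proof (H true false); pose proof (H true true).
  simpl in *; subst; reflexivity.
Qed.

Lemma P0_opp f c : P0 f c -> P0 (fun l => Copp (f l)) (Copp c).
Proof.
  intros H. eapply P0_ext.
  - assert (K := P0_mult _ _ _ _ (P0_const (RtoC (-1))) H). simpl in K.
    replace (Copp c) with (Cmult (RtoC (-1)) c) by (apply C_eq; simpl; ring). exact K.
  - intros l _; apply C_eq; simpl; ring.
Qed.

Lemma MP0_ext G H c : MP0 G c -> (forall l, l <> RtoC 0 -> G l = H l) -> MP0 H c.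
Proof. intros HG E i j. eapply P0_ext; [apply HG|]. intros l Hl; cbv beta; rewrite E; auto. Qed.

Lemma MP0_const c : MP0 (fun _ => c) c.
Proof. intros i j; apply P0_const. Qed.

Lemma MP0_mul G H c d : MP0 G c -> MP0 H d -> MP0 (fun l => M2mul (G l) (H l)) (M2mul c d).
Proof.
  intros HG HH i j. rewrite ent_mul.
  eapply P0_ext; [apply P0_plus; apply P0_mult; auto|]. intros l _; rewrite ent_mul; reflexivity.
Qed.

Lemma MP0_adjg G c : MP0 G c -> MP0 (fun l => adjg (G l)) (adjg c).
Proof.
  intros HG i j. destruct i, j; simpl.
  - apply (HG false false).
  - apply P0_opp, (HG true false).
  - apply P0_opp, (HG false true).
  - apply (HG true true).
Qed.

Lemma MP0_det G c : MP0 G c -> P0 (fun l => M2det (G l)) (M2det c).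
Proof.
  intros HG. unfold M2det. unfold Cminus.
  apply P0_plus; [|apply P0_opp]; apply P0_mult;
  [apply (HG false false)|apply (HG true true)|apply (HG false true)|apply (HG true false)].
Qed.

Lemma M2mul_assoc a b c : M2mul (M2mul a b) c = M2mul a (M2mul b c).
Proof. destruct a, b, c; unfold M2mul; simpl; f_equal; ring. Qed.
Lemma M2mul_id_l a : M2mul M2id a = a.
Proof. destruct a; unfold M2mul, M2id; simpl; f_equal; ring. Qed.
Lemma M2mul_id_r a : M2mul a M2id = a.
Proof. destruct a; unfold M2mul, M2id; simpl; f_equal; ring. Qed.
Lemma adjg_r a : M2det a = RtoC 1 -> M2mul a (adjg a) = M2id.
Proof.
  destruct a; unfold M2det, M2mul, adjg, M2id; simpl; intros H; f_equal;
  try (rewrite <- H; ring); ring.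
Qed.
Lemma adjg_l a : M2det a = RtoC 1 -> M2mul (adjg a) a = M2id.
Proof.
  destruct a; unfold M2det, M2mul, adjg, M2id; simpl; intros H; f_equal;
  try (rewrite <- H; ring); ring.
Qed.

Lemma RtoC_neq0 r : r <> 0 -> RtoC r <> RtoC 0.
Proof. intros H E; apply H; apply (f_equal fst) in E; exact E. Qed.

Lemma MP0_det_one G c : MP0 G c -> (forall r, 0 < r -> M2det (G (RtoC r)) = RtoC 1) ->
  forall l, l <> RtoC 0 -> M2det (G l) = RtoC 1.
Proof. intros HG Hr. apply (P0_K _ _ _ (MP0_det _ _ HG) Hr). Qed.

Lemma MN0_det_one G c : MN0 G c -> (forall r, 0 < r -> M2det (G (RtoC r)) = RtoC 1) ->
  forall l, l <> RtoC 0 -> M2det (G l) = RtoC 1.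
Proof.
  intros HG Hr l Hl.
  assert (K := MP0_det_one _ _ HG). simpl in K.
  rewrite <- (Cinv_involutive l) by auto. apply K; [|apply Cinv_neq0; auto].
  intros r Hr0. rewrite <- RtoC_inv by lra. apply Hr. apply Rinv_0_lt_compat; auto.
Qed.

Lemma birkhoff (U1 A V1 B : C -> M2) c1 c2 :
  MP0 U1 M2id -> MP0 A M2id -> MN0 V1 c1 -> MN0 B c2 ->
  (forall l, l <> RtoC 0 -> M2mul (U1 l) (V1 l) = M2mul (A l) (B l)) ->
  (forall r, 0 < r -> M2det (U1 (RtoC r)) = RtoC 1) ->
  (forall r, 0 < r -> M2det (B (RtoC r)) = RtoC 1) ->
  forall l, l <> RtoC 0 -> U1 l = A l.
Proof.
  intros HU HA HV HB E dU dB.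
  assert (dU' := MP0_det_one _ _ HU dU).
  assert (dB' := MN0_det_one _ _ HB dB).
  set (X := fun l => M2mul (adjg (U1 l)) (A l)).
  set (Y := fun l => M2mul (V1 l) (adjg (B l))).
  assert (XY : forall l, l <> RtoC 0 -> X l = Y l).
  { intros l Hl. unfold X, Y.
    rewrite <- (M2mul_id_r (M2mul (adjg (U1 l)) (A l))), <- (adjg_r (B l)) by auto.
    rewrite !M2mul_assoc, <- (M2mul_assoc (A l)), <- E by auto.
    rewrite <- !M2mul_assoc, adjg_l, M2mul_id_l by auto. reflexivity. }
  assert (HX : MP0 X (M2mul (adjg M2id) M2id)) by (apply MP0_mul; [apply MP0_adjg|]; auto).
  assert (HY : MP0 (fun m => X (Cinv m)) (M2mul c1 (adjg c2))).
  { eapply MP0_ext; [apply (MP0_mul _ _ _ _ HV (MP0_adjg _ _ HB))|].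
    intros m Hm. symmetry. apply XY. apply Cinv_neq0; auto. }
  intros l Hl.
  assert (Xl : X l = M2id).
  { apply M2_ent_eq. intros i j.
    rewrite (P0_liouville _ _ _ (HX i j) (HY i j) l Hl).
    destruct i, j; unfold M2mul, adjg, M2id; simpl; ring. }
  unfold X in Xl.
  rewrite <- (M2mul_id_l (A l)), <- (adjg_r (U1 l)) by auto.
  rewrite M2mul_assoc, Xl, M2mul_id_r. reflexivity.
Qed.

Lemma abs_conv (a : nat -> C) (g : C -> C) :
  (forall l, l <> RtoC 0 -> cser (fun n => Cmult (a n) (Cpow l n)) (g l)) ->
  forall R, 0 <= R -> ex_series (fun n => Cmod (a n) * R ^ n).
Proof.
  intros H R HR. set (r := 2 * R + 2).
  assert (Hr : 0 < r) by (unfold r; lra).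
  destruct (H (RtoC r) (RtoC_neq0 r ltac:(lra))) as [H1 H2].
  assert (L1 := ex_series_lim_0 _ (ex_intro _ _ H1)).
  assert (L2 := ex_series_lim_0 _ (ex_intro _ _ H2)).
  apply is_lim_seq_spec in L1, L2. simpl in L1, L2.
  destruct (filter_and (F:=eventually) _ _ (L1 (mkposreal (1/4) ltac:(lra))) (L2 (mkposreal (1/4) ltac:(lra)))) as [N0 HN0].
  apply (ex_series_incr_n _ N0).
  apply (ex_series_nonneg_le _ (fun k => (1/2) ^ (N0 + k))).
  - intros k. specialize (HN0 (N0 + k)%nat ltac:(lia)). simpl in HN0. destruct HN0 as [A1 A2].
    rewrite !Rminus_0_r in A1, A2.
    set (n := (N0 + k)%nat) in *.
    assert (Cb : Cmod (Cmult (a n) (Cpow (RtoC r) n)) <= 1).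
    { eapply Rle_trans; [apply Cmod_le_2|]. simpl. lra. }
    rewrite Cmod_mult, Cmod_pow, Cmod_R, Rabs_pos_eq in Cb by lra.
    assert (Hrn : 0 < r ^ n) by (apply pow_lt; lra).
    split; [apply Rmult_le_pos; [apply Cmod_ge_0| apply pow_le; lra]|].
    replace (R ^ n) with (r ^ n * (R / r) ^ n) by (rewrite <- Rpow_mult_distr; f_equal; field; lra).
    apply Rle_trans with ((R / r) ^ n).
    + rewrite <- Rmult_assoc. rewrite <- (Rmult_1_l ((R / r) ^ n)) at 2.
      apply Rmult_le_compat_r; [apply pow_le; apply Rdiv_le_0_compat; lra| lra].
    + apply pow_incr. split; [apply Rdiv_le_0_compat; lra|].
      apply (Rmult_le_reg_r r); auto. unfold Rdiv; rewrite Rmult_assoc, Rinv_l by lra. unfold r; lra.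
  - apply (ex_series_incr_n (fun k => (1/2) ^ k) N0). apply ex_series_geom. rewrite Rabs_pos_eq; lra.
Qed.

Lemma Czpow_pos l n : Czpow l (Z.of_nat n) = Cpow l n.
Proof.
  destruct n; [reflexivity|]. simpl Z.of_nat. unfold Czpow. rewrite SuccNat2Pos.id_succ. reflexivity.
Qed.

Lemma Czpow_neg l n : l <> RtoC 0 -> Czpow l (- Z.of_nat (S n))%Z = Cpow (Cinv l) (S n).
Proof.
  intros Hl. simpl Z.of_nat. simpl Z.opp. unfold Czpow. rewrite SuccNat2Pos.id_succ.
  rewrite Cpow_inv by auto. reflexivity.
Qed.

Lemma ent_zero i j : ent M2zero i j = RtoC 0.
Proof. destruct i, j; reflexivity. Qed.

Lemma plus_loop g a : laurent_coeffs a g -> (forall k, (k < 0)%Z -> a k = M2zero) ->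
  forall i j, PS (fun n => ent (a (Z.of_nat n)) i j) (fun l => ent (g l) i j).
Proof.
  intros HL Ha i j.
  assert (V : forall l, l <> RtoC 0 -> cser (fun n => Cmult (ent (a (Z.of_nat n)) i j) (Cpow l n)) (ent (g l) i j)).
  { intros l Hl. destruct (HL l Hl i j) as [Pp [Pn [H1 [H2 H3]]]].
    apply cser_of_C in H1, H2.
    assert (Pn = RtoC 0).
    { apply (cser_unique _ _ _ H2). eapply cser_ext; [|apply cser_zero].
      intros n; simpl. rewrite Ha by lia. rewrite ent_zero. ring. }
    subst Pn. rewrite H3. replace (Cplus Pp (RtoC 0)) with Pp by ring.
    eapply cser_ext; [|exact H1]. intros n; simpl. rewrite Czpow_pos; reflexivity. }
  split; [apply (abs_conv _ _ V)| exact V].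
Qed.

Lemma minus_loop g a : laurent_coeffs a g -> (forall k, (0 < k)%Z -> a k = M2zero) ->
  forall i j, PS (fun n => ent (a (- Z.of_nat n)%Z) i j) (fun m => ent (g (Cinv m)) i j).
Proof.
  intros HL Ha i j.
  assert (V : forall m, m <> RtoC 0 -> cser (fun n => Cmult (ent (a (- Z.of_nat n)%Z) i j) (Cpow m n)) (ent (g (Cinv m)) i j)).
  { intros m Hm. assert (Hl : Cinv m <> RtoC 0) by (apply Cinv_neq0; auto).
    destruct (HL (Cinv m) Hl i j) as [Pp [Pn [H1 [H2 H3]]]].
    apply cser_of_C in H1, H2.
    assert (Pp = ent (a 0%Z) i j).
    { apply (cser_unique _ _ _ H1).
      assert (K := cser_single (fun n => Cmult (ent (a (Z.of_nat n)) i j) (Czpow (Cinv m) (Z.of_nat n)))).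
      simpl in K. replace (Cmult (ent (a 0%Z) i j) (RtoC 1)) with (ent (a 0%Z) i j) in K by ring.
      apply K. intros n. rewrite Ha by lia. rewrite ent_zero. ring. }
    subst Pp. rewrite H3.
    assert (K := cser_shift (fun n => Cmult (ent (a (- Z.of_nat n)%Z) i j) (Cpow m n)) Pn).
    simpl in K. replace (Cmult (ent (a 0%Z) i j) (RtoC 1)) with (ent (a 0%Z) i j) in K by ring.
    apply K. eapply cser_ext; [|exact H2]. intros n. cbv beta. rewrite Czpow_neg, Cinv_involutive by auto.
    reflexivity. }
  split; [apply (abs_conv _ _ V)| exact V].
Qed.

Lemma SU2_det g : SU2_on_reals g -> forall r, 0 < r -> M2det (g (RtoC r)) = RtoC 1.
Proof. intros H r Hr. apply (H r); lra. Qed.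

Lemma LplusStar_MP0 g : LplusStarSU2 g -> MP0 g M2id /\ (forall r, 0 < r -> M2det (g (RtoC r)) = RtoC 1).
Proof.
  intros [a [HL [[Hn H0] [HS _]]]]. split; [|apply SU2_det; auto].
  intros i j. exists (fun n => ent (a (Z.of_nat n)) i j). split; [apply plus_loop; auto|].
  simpl. rewrite H0; reflexivity.
Qed.

Lemma Lplus_MP0 g : LplusSU2 g -> (exists c, MP0 g c) /\ (forall r, 0 < r -> M2det (g (RtoC r)) = RtoC 1).
Proof.
  intros [a [HL [Hn [HS _]]]]. split; [|apply SU2_det; auto].
  exists (a 0%Z). intros i j. exists (fun n => ent (a (Z.of_nat n)) i j). split; [apply plus_loop; auto|].
  reflexivity.
Qed.

Lemma LminusStar_MN0 g : LminusStarSU2 g -> MN0 g M2id /\ (forall r, 0 < r -> M2det (g (RtoC r)) = RtoC 1).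
Proof.
  intros [a [HL [[Hn H0] [HS _]]]]. split; [|apply SU2_det; auto].
  intros i j. exists (fun n => ent (a (- Z.of_nat n)%Z) i j). split; [apply minus_loop; auto|].
  simpl. rewrite H0; reflexivity.
Qed.

Lemma Lminus_MN0 g : LminusSU2 g -> (exists c, MN0 g c) /\ (forall r, 0 < r -> M2det (g (RtoC r)) = RtoC 1).
Proof.
  intros [a [HL [Hn [HS _]]]]. split; [|apply SU2_det; auto].
  exists (a 0%Z). intros i j. exists (fun n => ent (a (- Z.of_nat n)%Z) i j). split; [apply minus_loop; auto|].
  reflexivity.
Qed.

Definition cderiv (u : R -> C) (z : R) (d : C) : Prop :=
  is_derive (fun t => fst (u t)) z (fst d) /\ is_derive (fun t => snd (u t)) z (snd d).

Lemma cderiv_plus u v z d e : cderiv u z d -> cderiv v z e -> cderiv (fun t => Cplus (u t) (v t)) z (Cplus d e).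
Proof.
  intros [H1 H2] [H3 H4]; split; simpl.
  - exact (is_derive_plus _ _ _ _ _ H1 H3).
  - exact (is_derive_plus _ _ _ _ _ H2 H4).
Qed.

Lemma cderiv_cmul c u z d : cderiv u z d -> cderiv (fun t => Cmult c (u t)) z (Cmult c d).
Proof.
  intros [H1 H2]; split; simpl.
  - exact (is_derive_minus _ _ _ _ _ (is_derive_scal _ _ (fst c) _ H1) (is_derive_scal _ _ (snd c) _ H2)).
  - exact (is_derive_plus _ _ _ _ _ (is_derive_scal _ _ (fst c) _ H2) (is_derive_scal _ _ (snd c) _ H1)).
Qed.

Lemma cderiv_ext u v z d d' : cderiv u z d -> (forall t, u t = v t) -> d = d' -> cderiv v z d'.
Proof.
  intros [H1 H2] E Ed; subst d'; split.
  - eapply is_derive_ext; [|exact H1]. intros t; cbv beta; rewrite E; reflexivity.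
  - eapply is_derive_ext; [|exact H2]. intros t; cbv beta; rewrite E; reflexivity.
Qed.

Lemma cderiv_mulc c u z d : cderiv u z d -> cderiv (fun t => Cmult (u t) c) z (Cmult d c).
Proof.
  intros H. eapply cderiv_ext; [apply (cderiv_cmul c _ _ _ H)| |]; intros; cbv beta; ring.
Qed.

Definition Hd (h : R -> M2) (z : R) (L : M2) : Prop :=
  forall i j, cderiv (fun t => ent (h t) i j) z (ent L i j).

Definition Dv (h : R -> M2) (z : R) : M2 :=
  let d i j : C := (Derive (fun t => fst (ent (h t) i j)) z, Derive (fun t => snd (ent (h t) i j)) z) in
  mkM2 (d false false) (d false true) (d true false) (d true true).

Lemma M2pdx_Dv F x y : M2pdx F x y = Dv (fun t => F t y) x.
Proof. reflexivity. Qed.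
Lemma M2pdy_Dv F x y : M2pdy F x y = Dv (fun t => F x t) y.
Proof. reflexivity. Qed.
Lemma has_pdx_Hd F x y L : has_M2pdx F x y L <-> Hd (fun t => F t y) x L.
Proof. reflexivity. Qed.
Lemma has_pdy_Hd F x y L : has_M2pdy F x y L <-> Hd (fun t => F x t) y L.
Proof. reflexivity. Qed.

Lemma Hd_Dv h z L : Hd h z L -> Dv h z = L.
Proof.
  intros H. apply M2_ent_eq. intros i j. destruct (H i j) as [H1 H2].
  apply is_derive_unique in H1, H2.
  assert (E : ent (Dv h z) i j = (Derive (fun t => fst (ent (h t) i j)) z, Derive (fun t => snd (ent (h t) i j)) z))
    by (destruct i, j; reflexivity).
  rewrite E. destruct (ent L i j) as [p q]; simpl in H1, H2. f_equal; [exact H1| exact H2].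
Qed.

Lemma Hd_conj h z L P Q : Hd h z L -> Hd (fun t => M2mul (M2mul P (h t)) Q) z (M2mul (M2mul P L) Q).
Proof.
  intros H i j.
  eapply cderiv_ext.
  - apply cderiv_plus; apply cderiv_mulc; apply cderiv_plus; apply cderiv_cmul; apply H.
  - intros t. rewrite !ent_mul. reflexivity.
  - rewrite !ent_mul. reflexivity.
Qed.

Lemma Hd_ext h g z L : Hd h z L -> (exists e, 0 < e /\ forall t, Rabs (t - z) < e -> h t = g t) -> Hd g z L.
Proof.
  intros H [e [He E]] i j. destruct (H i j) as [H1 H2].
  assert (Loc : locally z (fun t => h t = g t)).
  { exists (mkposreal e He). intros t Ht. apply E. exact Ht. }
  split; (eapply is_derive_ext_loc; [|eassumption]); eapply filter_imp; try exact Loc;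
  intros t Et; simpl; rewrite Et; reflexivity.
Qed.

Lemma smooth_exd O f x y : smooth_on O f -> O x y -> ex_derive (fun t => f t y) x /\ ex_derive (fun t => f x t) y.
Proof.
  intros [F [HF0 HF]] HO. destruct (HF nil x y HO) as [H1 [H2 _]]. rewrite HF0 in H1, H2.
  split; eexists; eassumption.
Qed.

Lemma smooth_Hd O F x y : M2smooth_on O F -> O x y ->
  Hd (fun t => F t y) x (M2pdx F x y) /\ Hd (fun t => F x t) y (M2pdy F x y).
Proof.
  intros HS HO. split; intros i j; destruct (HS i j) as [S1 S2];
  destruct (smooth_exd _ _ _ _ S1 HO) as [E1 E2]; destruct (smooth_exd _ _ _ _ S2 HO) as [E3 E4];
  apply Derive_correct in E1, E2, E3, E4; split; destruct i, j; assumption.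
Qed.

Lemma Cinv_1 : Cinv (RtoC 1) = RtoC 1.
Proof. rewrite <- (Cmult_1_l (Cinv (RtoC 1))). apply Cinv_r. apply RtoC_neq0; lra. Qed.

Lemma cexpi_inv s : Cmult (cexpi s) (cexpi (- s)) = RtoC 1.
Proof.
  unfold cexpi. apply C_eq; simpl; rewrite cos_neg, sin_neg; [|ring].
  rewrite <- (sin2_cos2 s). unfold Rsqr; ring.
Qed.

Lemma Rot_det t : M2det (Rot t) = RtoC 1.
Proof. unfold M2det, Rot; simpl. rewrite cexpi_inv. ring. Qed.

Lemma Rot_inv t : M2inv (Rot t) = mkM2 (cexpi (- (t / 2))) (RtoC 0) (RtoC 0) (cexpi (t / 2)).
Proof.
  unfold M2inv. rewrite Rot_det, Cinv_1. unfold M2scal, Rot; simpl. f_equal; ring.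
Qed.

Lemma Rot_inv_l t : M2mul (M2inv (Rot t)) (Rot t) = M2id.
Proof.
  rewrite Rot_inv. unfold M2mul, Rot, M2id; simpl. f_equal; try ring.
  - rewrite <- (cexpi_inv (t / 2)); ring.
  - rewrite <- (cexpi_inv (t / 2)); ring.
Qed.

Lemma Rot_inv_r t : M2mul (Rot t) (M2inv (Rot t)) = M2id.
Proof.
  rewrite Rot_inv. unfold M2mul, Rot, M2id; simpl. f_equal; try ring.
  - rewrite <- (cexpi_inv (t / 2)); ring.
  - rewrite <- (cexpi_inv (t / 2)); ring.
Qed.

Lemma M2det_mul a b : M2det (M2mul a b) = Cmult (M2det a) (M2det b).
Proof. destruct a, b; unfold M2det, M2mul; simpl; ring. Qed.

Lemma M2det_Rinv t : M2det (M2inv (Rot t)) = RtoC 1.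
Proof. rewrite Rot_inv. unfold M2det; simpl. rewrite Cmult_comm, cexpi_inv. ring. Qed.

Lemma conj_inv t X : M2inv (M2mul (M2mul (M2inv (Rot t)) X) (Rot t)) =
  M2mul (M2mul (M2inv (Rot t)) (M2inv X)) (Rot t).
Proof.
  assert (Hd : M2det (M2mul (M2mul (M2inv (Rot t)) X) (Rot t)) = M2det X).
  { rewrite !M2det_mul, M2det_Rinv, Rot_det. ring. }
  unfold M2inv at 1. rewrite Hd. rewrite Rot_inv.
  pose proof (cexpi_inv (t / 2)) as He.
  destruct X as [a b c d]. unfold M2inv, M2scal, M2mul, Rot; simpl. f_equal; ring [He].
Qed.

Lemma scal_conj c P Y Q : M2scal c (M2mul (M2mul P Y) Q) = M2mul (M2mul P (M2scal c Y)) Q.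
Proof. destruct P, Y, Q; unfold M2scal, M2mul; simpl; f_equal; ring. Qed.

Lemma eta_alg D Di Xi L c : M2mul D Di = M2id ->
  M2scal c (M2mul (M2mul (M2mul Di Xi) D) (M2mul (M2mul Di L) D)) = M2mul (M2mul Di (M2scal c (M2mul Xi L))) D.
Proof.
  intros H. rewrite <- scal_conj. f_equal.
  rewrite !M2mul_assoc. f_equal. f_equal. rewrite <- (M2mul_assoc D Di), H, M2mul_id_l. reflexivity.
Qed.

Theorem proposition3
  (x0 y0 : R) (hx0 : 0 < x0) (hy0 : 0 < y0)
  (phi : R -> R -> R) (Hphi : smooth_on_D x0 y0 phi)
  (HSG : forall x y, inD x0 y0 x y -> pdy (pdx phi) x y = sin (phi x y))
  (U : R -> R -> C -> M2) (HU : is_frame x0 y0 phi U)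
  (theta : R -> R -> R) (Htheta : smooth_on_D x0 y0 theta)
  (Omega : R -> R -> Prop) (HOopen : open2 Omega)
  (HOD : forall x y, Omega x y -> inD x0 y0 x y)
  (Up Vm Um Vp Uhp Vhm Uhm Vhp : R -> R -> C -> M2)
  (HUp : forall x y, Omega x y -> LplusStarSU2 (Up x y))
  (HVm : forall x y, Omega x y -> LminusSU2 (Vm x y))
  (HUm : forall x y, Omega x y -> LminusStarSU2 (Um x y))
  (HVp : forall x y, Omega x y -> LplusSU2 (Vp x y))
  (HUhp : forall x y, Omega x y -> LplusStarSU2 (Uhp x y))
  (HVhm : forall x y, Omega x y -> LminusSU2 (Vhm x y))
  (HUhm : forall x y, Omega x y -> LminusStarSU2 (Uhm x y))
  (HVhp : forall x y, Omega x y -> LplusSU2 (Vhp x y))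
  (Hsmooth : forall l : C, l <> RtoC 0 ->
     M2smooth_on Omega (fun x y => Up x y l) /\ M2smooth_on Omega (fun x y => Vm x y l) /\
     M2smooth_on Omega (fun x y => Um x y l) /\ M2smooth_on Omega (fun x y => Vp x y l) /\
     M2smooth_on Omega (fun x y => Uhp x y l) /\ M2smooth_on Omega (fun x y => Vhm x y l) /\
     M2smooth_on Omega (fun x y => Uhm x y l) /\ M2smooth_on Omega (fun x y => Vhp x y l))
  (Hfact : forall x y, Omega x y -> forall l : C, l <> RtoC 0 ->
     U x y l = M2mul (Up x y l) (Vm x y l) /\
     U x y l = M2mul (Um x y l) (Vp x y l))
  (Hfacth : forall x y, Omega x y -> forall l : C, l <> RtoC 0 ->
     M2mul (M2mul (M2inv (Rot (theta 0 0))) (U x y l)) (Rot (theta x y))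
       = M2mul (Uhp x y l) (Vhm x y l) /\
     M2mul (M2mul (M2inv (Rot (theta 0 0))) (U x y l)) (Rot (theta x y))
       = M2mul (Uhm x y l) (Vhp x y l)) :
  forall x y, Omega x y -> forall l : C, l <> RtoC 0 ->
    eta_x Uhp x y l = M2mul (M2mul (M2inv (Rot (theta 0 0))) (eta_x Up x y l)) (Rot (theta 0 0)) /\
    eta_y Uhm x y l = M2mul (M2mul (M2inv (Rot (theta 0 0))) (eta_y Um x y l)) (Rot (theta 0 0)).
Proof.
  intros x y HO l Hl.
  assert (DD : M2mul (Rot (theta 0 0)) (M2inv (Rot (theta 0 0))) = M2id) by apply Rot_inv_r.
  assert (DD' : M2mul (M2inv (Rot (theta 0 0))) (Rot (theta 0 0)) = M2id) by apply Rot_inv_l.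
  assert (Claim1 : forall x' y', Omega x' y' -> forall l', l' <> RtoC 0 ->
    Uhp x' y' l' = M2mul (M2mul (M2inv (Rot (theta 0 0))) (Up x' y' l')) (Rot (theta 0 0))).
  { intros x' y' HO'.
    destruct (LplusStar_MP0 _ (HUhp _ _ HO')) as [MU dU].
    destruct (LplusStar_MP0 _ (HUp _ _ HO')) as [MA _].
    destruct (Lminus_MN0 _ (HVhm _ _ HO')) as [[c1 MV] _].
    destruct (Lminus_MN0 _ (HVm _ _ HO')) as [[c2 MB] dB].
    apply (birkhoff (Uhp x' y') (fun l => M2mul (M2mul (M2inv (Rot (theta 0 0))) (Up x' y' l)) (Rot (theta 0 0)))
             (Vhm x' y') (fun l => M2mul (M2mul (M2inv (Rot (theta 0 0))) (Vm x' y' l)) (Rot (theta x' y')))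
             c1 (M2mul (M2mul (M2inv (Rot (theta 0 0))) c2) (Rot (theta x' y')))).
    - exact MU.
    - replace M2id with (M2mul (M2mul (M2inv (Rot (theta 0 0))) M2id) (Rot (theta 0 0)))
        by (rewrite M2mul_id_r; exact DD').
      apply MP0_mul; [apply MP0_mul|]; auto using MP0_const.
    - exact MV.
    - unfold MN0. apply MP0_mul; [apply MP0_mul|]; [apply MP0_const | exact MB | apply MP0_const].
    - intros l' Hl'. destruct (Hfacth x' y' HO' l' Hl') as [E _]. rewrite <- E.
      destruct (Hfact x' y' HO' l' Hl') as [E2 _]. rewrite E2.
      rewrite !M2mul_assoc. rewrite <- (M2mul_assoc (Rot (theta 0 0))), DD, M2mul_id_l. reflexivity.
    - exact dU.
    - intros r Hr. rewrite !M2det_mul, dB, M2det_Rinv, Rot_det by auto. ring. }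
  assert (Claim2 : forall x' y', Omega x' y' -> forall l', l' <> RtoC 0 ->
    Uhm x' y' l' = M2mul (M2mul (M2inv (Rot (theta 0 0))) (Um x' y' l')) (Rot (theta 0 0))).
  { intros x' y' HO'.
    destruct (LminusStar_MN0 _ (HUhm _ _ HO')) as [MU dU].
    destruct (LminusStar_MN0 _ (HUm _ _ HO')) as [MA _].
    destruct (Lplus_MP0 _ (HVhp _ _ HO')) as [[c1 MV] _].
    destruct (Lplus_MP0 _ (HVp _ _ HO')) as [[c2 MB] dB].
    assert (K : forall m, m <> RtoC 0 -> Uhm x' y' (Cinv m) =
       M2mul (M2mul (M2inv (Rot (theta 0 0))) (Um x' y' (Cinv m))) (Rot (theta 0 0))).
    { apply (birkhoff (fun m => Uhm x' y' (Cinv m))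
               (fun m => M2mul (M2mul (M2inv (Rot (theta 0 0))) (Um x' y' (Cinv m))) (Rot (theta 0 0)))
               (fun m => Vhp x' y' (Cinv m))
               (fun m => M2mul (M2mul (M2inv (Rot (theta 0 0))) (Vp x' y' (Cinv m))) (Rot (theta x' y')))
               c1 (M2mul (M2mul (M2inv (Rot (theta 0 0))) c2) (Rot (theta x' y')))).
      - exact MU.
      - replace M2id with (M2mul (M2mul (M2inv (Rot (theta 0 0))) M2id) (Rot (theta 0 0)))
          by (rewrite M2mul_id_r; exact DD').
        apply MP0_mul; [apply MP0_mul|]; [apply MP0_const | exact MA | apply MP0_const].
      - unfold MN0. eapply MP0_ext; [exact MV|]. intros m Hm. rewrite Cinv_involutive; auto.
      - unfold MN0. eapply MP0_ext.
        + apply MP0_mul; [apply MP0_mul|]; [apply MP0_const | exact MB | apply MP0_const].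
        + intros m Hm. cbv beta. rewrite Cinv_involutive; auto.
      - intros m Hm. assert (Hl' : Cinv m <> RtoC 0) by (apply Cinv_neq0; auto).
        destruct (Hfacth x' y' HO' _ Hl') as [_ E]. rewrite <- E.
        destruct (Hfact x' y' HO' _ Hl') as [_ E2]. rewrite E2.
        rewrite !M2mul_assoc. rewrite <- (M2mul_assoc (Rot (theta 0 0))), DD, M2mul_id_l. reflexivity.
      - intros r Hr. rewrite <- RtoC_inv by lra. apply dU. apply Rinv_0_lt_compat; auto.
      - intros r Hr. rewrite <- RtoC_inv by lra. rewrite !M2det_mul, dB, M2det_Rinv, Rot_det.
        + ring.
        + apply Rinv_0_lt_compat; auto. }
    intros l0 Hl0. rewrite <- (Cinv_involutive l0) by auto. apply K. apply Cinv_neq0; auto. }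
  assert (Hloc : exists e, 0 < e /\ (forall t, Rabs (t - x) < e -> Omega t y) /\ (forall t, Rabs (t - y) < e -> Omega x t)).
  { destruct (HOopen x y HO) as [e [He HE]]. exists e; split; [auto|split]; intros t Ht; apply HE; auto;
    rewrite Rminus_diag, Rabs_R0; auto. }
  destruct Hloc as [e [He [Hex Hey]]].
  destruct (Hsmooth l Hl) as [SUp [_ [SUm _]]].
  split.
  - unfold eta_x. rewrite (Claim1 x y HO l Hl).
    assert (Dx : M2pdx (fun s t => Uhp s t l) x y =
                 M2mul (M2mul (M2inv (Rot (theta 0 0))) (M2pdx (fun s t => Up s t l) x y)) (Rot (theta 0 0))).
    { rewrite M2pdx_Dv. apply Hd_Dv.
      destruct (smooth_Hd _ _ x y SUp HO) as [H1 _].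
      eapply Hd_ext; [apply (Hd_conj _ _ _ (M2inv (Rot (theta 0 0))) (Rot (theta 0 0)) H1)|].
      exists e; split; auto. intros t Ht. symmetry. apply Claim1; auto. }
    rewrite Dx, conj_inv. apply eta_alg. exact DD.
  - unfold eta_y. rewrite (Claim2 x y HO l Hl).
    assert (Dy : M2pdy (fun s t => Uhm s t l) x y =
                 M2mul (M2mul (M2inv (Rot (theta 0 0))) (M2pdy (fun s t => Um s t l) x y)) (Rot (theta 0 0))).
    { rewrite M2pdy_Dv. apply Hd_Dv.
      destruct (smooth_Hd _ _ x y SUm HO) as [_ H1].
      eapply Hd_ext; [apply (Hd_conj _ _ _ (M2inv (Rot (theta 0 0))) (Rot (theta 0 0)) H1)|].
      exists e; split; auto. intros t Ht. symmetry. apply Claim2; auto. }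
    rewrite Dy, conj_inv. apply eta_alg. exact DD.
Qed.
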